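(* Let $\lambda$ be a partition and $T$ an $\mathbb{N}$-tableau of shape $\lambda$. Consider any ordering $b_1,\ldots,b_r$ of the boxes of $\lambda$ that is a linear extension of the poset $P_\lambda$ (where $(i,j)\le(k,l)$ iff $i\le k$ and $j\le l$), and let $T_s$ denote the restriction of $T$ to the boxes $b_1,\dots,b_s$ (so each $T_s$ is obtained from $T_{s-1}$ by adding the corner box $b_s$ with its entry from $T$). Starting from $\widehat{T_0}=\emptyset$ and applying the toggle step described in the context to pass from $\widehat{T_{s-1}}$ to $\widehat{T_s}$ for $s=1,\dots,r$, the resulting final tableau $\widehat{T_r}$ does not depend on the choice of linear extension. Thus the map $T\mapsto \widehat{T}$ is well defined.
   Context: Partitions are drawn in English notation with matrix coordinates: the box in row $i$ and column $j$ is $(i,j)$, and $(1,1)$ is the upper-left box. An $\mathbb{N}$-tableau of shape $\lambda$ is an assignment of a nonnegative integer to each box of $\lambda$. A corner box of a partition is a box $(i,j)$ such that neither $(i+1,j)$ nor $(i,j+1)$ is a box. Toggle step: Suppose $T'$ is obtained from an $\mathbb{N}$-tableau $T$ by adding a box $(i,j)$ (which is a corner box of $\mathrm{sh}(T')$) with entry $x$, and $\widehat{T}$ is a given $\mathbb{N}$-tableau of shape $\mathrm{sh}(T)$. For $k\ge1$ let $\beta_k$ be the entry of $\widehat{T}$ at $(i-k,j-k)$, $\gamma_k$ the entry at $(i-k+1,j-k)$ and $\alpha_k$ the entry at $(i-k,j-k+1)$, each taken to be $0$ if the corresponding box is not a box of $\mathrm{sh}(T)$ (in particular if a coordinate is nonpositive).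 Then $\widehat{T'}$ is the $\mathbb{N}$-tableau of shape $\mathrm{sh}(T')$ that agrees with $\widehat{T}$ except that for each $1\le k<\min(i,j)$ the entry at $(i-k,j-k)$ is replaced by $\max(\alpha_{k+1},\gamma_{k+1})+\min(\alpha_k,\gamma_k)-\beta_k$, and the entry at the new box $(i,j)$ is $\max(\alpha_1,\gamma_1)+x$. *)

(* Defs.v *)
From HB Require Import structures.
From mathcomp Require Import all_boot all_order all_algebra.
Set Implicit Arguments. Unset Strict Implicit. Unset Printing Implicit Defensive.
Import Order.TTheory GRing.Theory Num.Theory.

(* Boxes (i,j) in matrix coordinates, 1-indexed: (1,1) is the upper-left box. *)
Definition box := (nat * nat)%type.

Definition is_partition (la : seq nat) : bool :=
  sorted geq la && all (fun m => 0 < m) la.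

Definition in_shape (la : seq nat) (b : box) : bool :=
  [&& 0 < b.1, b.1 <= size la, 0 < b.2 & b.2 <= nth 0 la b.1.-1].

Definition box_le (b c : box) : bool := (b.1 <= c.1) && (b.2 <= c.2).

Definition linear_extension (la : seq nat) (bs : seq box) : Prop :=
  [/\ uniq bs,
      (forall b, (b \in bs) = in_shape la b) &
      (forall s t, s < size bs -> t < size bs ->
         box_le (nth (0,0) bs s) (nth (0,0) bs t) -> s <= t)].

(* N-tableaux are functions box -> nat (only the values on the shape matter).
   The hat-tableaux are stored as functions box -> int (only the values on the
   current shape matter; integer values avoid any truncated subtraction). *)

(* The toggle step: S is the list of boxes of sh(T) (so sh(T') = S ++ [b]),
   Th is hat T, b = (i,j) the new box with entry x. *)
Definition toggle (S : seq box) (Th : box -> int) (b : box) (x : nat) : box -> int :=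
  let e p := if p \in S then Th p else 0%R in
  let i := b.1 in let j := b.2 in
  let alpha k := e (i - k, (j - k).+1) in
  let gamma k := e ((i - k).+1, j - k) in
  let beta  k := e (i - k, j - k) in
  fun p =>
    if p == b then (Num.max (alpha 1) (gamma 1) + x%:Z)%R
    else if [&& 0 < p.1, p.1 < i, 0 < p.2, p.2 < j & i - p.1 == j - p.2] then
      let k := i - p.1 in
      (Num.max (alpha k.+1) (gamma k.+1) + Num.min (alpha k) (gamma k) - beta k)%R
    else Th p.

Fixpoint hat_aux (T : box -> nat) (S : seq box) (Th : box -> int) (bs : seq box)
  : box -> int :=
  match bs with
  | [::] => Th
  | b :: bs' => hat_aux T (rcons S b) (toggle S Th b (T b)) bs'
  end.

Definition hat_along (T : box -> nat) (bs : seq box) : box -> int :=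
  hat_aux T [::] (fun _ => 0%R) bs.

(* Main.v *)
Require Import Defs.
From mathcomp Require Import all_boot all_order all_algebra.
From mathcomp Require Import zify.
Import Order.TTheory GRing.Theory Num.Theory.
Set Implicit Arguments. Unset Strict Implicit.

Definition ev (S : seq box) (Th : box -> int) (q : box) : int :=
  if q \in S then Th q else 0%R.

Definition tog (E : box -> int) (Th : box -> int) (b : box) (x : nat) : box -> int :=
  let i := b.1 in let j := b.2 in
  let alpha k := E (i - k, (j - k).+1) in
  let gamma k := E ((i - k).+1, j - k) in
  let beta  k := E (i - k, j - k) in
  fun p =>
    if p == b then (Num.max (alpha 1) (gamma 1) + x%:Z)%R
    else if [&& 0 < p.1, p.1 < i, 0 < p.2, p.2 < j & i - p.1 == j - p.2] then
      let k := i - p.1 in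
      (Num.max (alpha k.+1) (gamma k.+1) + Num.min (alpha k) (gamma k) - beta k)%R
    else Th p.

Lemma toggleE S Th b x p : toggle S Th b x p = tog (ev S Th) Th b x p.
Proof. by []. Qed.

Definition pos (b : box) := (0 < b.1) && (0 < b.2).
Definition inW (b p : box) :=
  (p == b) || [&& 0 < p.1, p.1 < b.1, 0 < p.2, p.2 < b.2 & b.1 - p.1 == b.2 - p.2].
Definition near (b q : box) :=
  [&& q.1 <= b.1, q.2 <= b.2, b.1 - q.1 <= (b.2 - q.2).+1 & b.2 - q.2 <= (b.1 - q.1).+1].

Lemma tog_notW E Th b x p : ~~ inW b p -> tog E Th b x p = Th p.
Proof. by rewrite /inW /tog /= => /norP [/negbTE -> /negbTE ->]. Qed.

Lemma tog_ext E1 E2 Th1 Th2 b x p :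
  E1 =1 E2 -> Th1 p = Th2 p -> tog E1 Th1 b x p = tog E2 Th2 b x p.
Proof. by move=> H H2; rewrite /tog /= !H H2. Qed.

Lemma tog_local E1 E2 Th1 Th2 b x p : pos b ->
  (forall q, near b q -> E1 q = E2 q) -> Th1 p = Th2 p ->
  tog E1 Th1 b x p = tog E2 Th2 b x p.
Proof.
move=> /andP [b1 b2] H H2; rewrite /tog /=.
case: eqP => [_|_].
  by rewrite !H //; apply/and4P; split=> /=; lia.
case: ifP => // /and5P [h1 h2 h3 h4 /eqP h5].
by rewrite !H //; apply/and4P; split=> /=; lia.
Qed.

Lemma inW_near b p : inW b p -> near b p.
Proof.
case/orP => [/eqP ->|/and5P [h1 h2 h3 h4 /eqP h5]]; apply/and4P; split; lia.
Qed.

Lemma near_notW x b q : ~~ box_le x b -> ~~ box_le b x -> near b q -> ~~ inW x q.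
Proof.
rewrite /box_le !negb_and -!ltnNge => H1 H2 /and4P [n1 n2 n3 n4].
apply/negP => /orP [/eqP E|/and5P [h1 h2 h3 h4 /eqP h5]].
  by subst q; case/orP: H1; lia.
by case/orP: H1 => ?; case/orP: H2 => ?; lia.
Qed.

Lemma swap_half S Th x b vx vb p : pos b -> inW b p ->
  ~~ box_le x b -> ~~ box_le b x ->
  toggle (rcons S x) (toggle S Th x vx) b vb p = toggle S Th b vb p.
Proof.
move=> pb Hp H1 H2; rewrite !toggleE.
apply: tog_local => //.
  move=> q nq; have nW := near_notW H1 H2 nq.
  rewrite /ev mem_rcons inE.
  have -> : (q == x) = false.
    by apply/negbTE; apply: contraNneq nW => ->; rewrite /inW eqxx.
  by rewrite /= toggleE tog_notW.
by rewrite toggleE tog_notW // (near_notW H1 H2 (inW_near Hp)).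
Qed.

Lemma swap S Th x b vx vb p : pos x -> pos b ->
  ~~ box_le x b -> ~~ box_le b x ->
  toggle (rcons S x) (toggle S Th x vx) b vb p =
  toggle (rcons S b) (toggle S Th b vb) x vx p.
Proof.
move=> px pb H1 H2.
case Hb: (inW b p).
  rewrite swap_half // [RHS]toggleE tog_notW //.
  exact: near_notW H1 H2 (inW_near Hb).
case Hx: (inW x p).
  rewrite [RHS]swap_half // [LHS]toggleE tog_notW ?Hb //.
by rewrite !toggleE !tog_notW ?Hb ?Hx // !toggleE !tog_notW ?Hb ?Hx.
Qed.

Lemma hat_aux_ext T S1 S2 Th1 Th2 bs : S1 =i S2 -> Th1 =1 Th2 ->
  hat_aux T S1 Th1 bs =1 hat_aux T S2 Th2 bs.
Proof.
elim: bs S1 S2 Th1 Th2 => [|b bs IH] S1 S2 Th1 Th2 HS HT p //=.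
apply: IH => [q|q]; first by rewrite !mem_rcons !inE HS.
rewrite !toggleE; apply: tog_ext => // r.
by rewrite /ev HS HT.
Qed.

Lemma move_front T S Th u b w : pos b -> all pos u ->
  (forall c, c \in u -> ~~ box_le c b && ~~ box_le b c) ->
  hat_aux T S Th (u ++ b :: w) =1 hat_aux T S Th (b :: u ++ w).
Proof.
elim: u S Th => [|c u IH] S Th pb /= Hu Hinc p //.
case/andP: Hu => pc Hu.
rewrite IH //; last by move=> d hd; apply: Hinc; rewrite inE hd orbT.
rewrite /=.
have /andP [h1 h2] := Hinc c (mem_head _ _).
apply: hat_aux_ext => q; first by rewrite !(mem_rcons, inE) orbCA.
exact: swap.
Qed.

Definition R (a c : box) := ~~ box_le c a.

Lemma main T bs1 : forall bs2 S Th, uniq bs1 -> perm_eq bs1 bs2 ->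
  pairwise R bs1 -> pairwise R bs2 -> all pos bs1 ->
  hat_aux T S Th bs1 =1 hat_aux T S Th bs2.
Proof.
elim: bs1 => [|b bs1 IH] bs2 S Th Hu Hp H1 H2 Hpos p.
  by rewrite perm_sym in Hp; move/perm_nilP: Hp => ->.
have bin : b \in bs2 by rewrite -(perm_mem Hp) mem_head.
case/splitPr: bin H2 Hp => u w H2 Hp.
have Hu2 : uniq (u ++ b :: w) by rewrite -(perm_uniq Hp).
move: (Hu) => /= /andP [bnin Hu1].
move: (H1); rewrite pairwise_cons => /andP [Ab P1].
move: (Hpos) => /= /andP [pb Pos1].
rewrite move_front //; first last.
- move=> c cu; apply/andP; split.
    have cb : c != b.
      by apply: contraTneq cu => ->; move: Hu2; rewrite cat_uniq /= => /and3P [_ /norP [] ].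
    have : c \in b :: bs1 by rewrite (perm_mem Hp) mem_cat cu.
    rewrite inE (negbTE cb) /= => cbs.
    exact: (allP Ab).
  move: H2; rewrite pairwise_cat allrel_consr => /and3P [/andP [Ar _] _ _].
  exact: (allP Ar).
- have : all pos (u ++ b :: w) by rewrite -(perm_all _ Hp).
  by rewrite all_cat => /andP [].
rewrite /=.
apply: IH => //.
- by rewrite -(perm_cons b) (perm_trans Hp) // -cat1s perm_catCA.
- apply: subseq_pairwise H2; apply: cat_subseq => //; exact: subseq_cons.
Qed.

Theorem proposition2p4 (la : seq nat) (T : box -> nat) (bs1 bs2 : seq box) :
  is_partition la ->
  linear_extension la bs1 -> linear_extension la bs2 ->
  forall b : box, in_shape la b -> hat_along T bs1 b = hat_along T bs2 b.
Proof.
move=> _ [u1 m1 o1] [u2 m2 o2] b _.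
have pw : forall bs, (forall s t, s < size bs -> t < size bs ->
      box_le (nth (0,0) bs s) (nth (0,0) bs t) -> s <= t) -> pairwise R bs.
  move=> bs o; apply/(pairwiseP (0,0)) => s t hs ht st.
  apply/negP => /(o _ _ ht hs); lia.
have ps : forall bs, (forall c, (c \in bs) = in_shape la c) -> all pos bs.
  move=> bs m; apply/allP => c; rewrite m => /and4P [h1 _ h3 _].
  by rewrite /pos h1 h3.
apply: main => //; try by [apply: pw | apply: ps].
by apply: uniq_perm => // c; rewrite m1 m2.
Qed.
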